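(* Let $I\subseteq\mathbb K[x_1,\dots,x_n]$ be an $\mathfrak m$-primary monomial ideal generated in a single degree $d$ (so $\mu_i=x_i^d\in G(I)$ for all $i$), and let $J=\langle\mu_1,\dots,\mu_n\rangle$. The following are equivalent: (1) $I$ is Freiman, i.e. $|G(I^2)|=n|G(I)|-\binom n2$; (2) $I$ is very good; (3) $I^2=IJ$.
   Context: Let $\mathbb K$ be a field, $R=\mathbb K[x_1,\dots,x_n]$, $\mathfrak m=\langle x_1,\dots,x_n\rangle$, $\mathbb N=\{0,1,2,\dots\}$. A monomial $x_1^{\alpha_1}\cdots x_n^{\alpha_n}$ is identified with the point $(\alpha_1,\dots,\alpha_n)\in\mathbb N^n$. For a monomial ideal $I$, $G(I)$ denotes its (unique) minimal monomial generating set. An equigenerated monomial ideal $I$ with analytic spread $l(I)$ is called Freiman if $|G(I^2)|=l(I)|G(I)|-\binom{l(I)}{2}$; for $\mathfrak m$-primary $I$, $l(I)=n$. If $I$ is an $\mathfrak m$-primary monomial ideal, then for each $i$ there is a unique $d_i\ge1$ with $x_i^{d_i}\in G(I)$; write $\mu_i=x_i^{d_i}$. For $(a_1,\dots,a_n)\in\mathbb N^n$ the box associated to $I$ is $B_{a_1,\dots,a_n}=([a_1d_1,(a_1+1)d_1]\times\cdots\times[a_nd_n,(a_n+1)d_n])\cap\mathbb N^n$; a monomial belongs to a box if its exponent vector does. An $\mathfrak m$-primary monomial ideal $I$ is called good if for every integer $l\ge1$, every element of $G(I^l)$ belongs to some box $B_{a_1,\dots,a_n}$ with $a_1+\dots+a_n=l-1$.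 For a good ideal $I$ and $a\in\mathbb N^n$, with $l=a_1+\dots+a_n+1$, define $I_{a}=\left\langle \frac{m}{\mu_1^{a_1}\cdots\mu_n^{a_n}} : m\in B_{a}\cap G(I^l)\right\rangle$. A good ideal $I$ is called very good if $I_{a}=I$ for all $a\in\mathbb N^n$. *)

(* Defs.v *)
(* Monomial ideals of K[x_1..x_n] are modelled
   combinatorially: a monomial is its exponent vector in N^n, a monomial
   ideal is given by a finite generating list of monomials. *)
From HB Require Import structures.
From mathcomp Require Import all_boot.
Set Implicit Arguments. Unset Strict Implicit. Unset Printing Implicit Defensive.

Definition mono (n : nat) := {ffun 'I_n -> nat}.

Definition mzero n : mono n := [ffun _ => 0].
Definition madd n (m m' : mono n) : mono n := [ffun i => m i + m' i].
Definition upow n (i : 'I_n) (k : nat) : mono n := [ffun j => if j == i then k else 0].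
Definition mdeg n (m : mono n) : nat := \sum_(i < n) m i.
Definition mdiv n (g m : mono n) : bool := [forall i, g i <= m i].

Definition in_ideal n (S : seq (mono n)) (m : mono n) : bool := has (fun g => mdiv g m) S.

Definition ideal_eq n (S T : seq (mono n)) : Prop := forall m, in_ideal S m = in_ideal T m.

Definition mingens n (S : seq (mono n)) : seq (mono n) :=
  undup [seq m <- S | ~~ has (fun g => mdiv g m && (g != m)) S].

Definition prodgens n (S T : seq (mono n)) : seq (mono n) :=
  [seq madd s t | s <- S, t <- T].

Definition powgens n (S : seq (mono n)) (l : nat) : seq (mono n) :=
  iter l (prodgens S) [:: mzero n].

Definition mprimary n (S : seq (mono n)) : Prop :=
  ~~ in_ideal S (mzero n) /\ forall i : 'I_n, exists k, in_ideal S (upow i k).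

Definition equigen n (S : seq (mono n)) (d : nat) : Prop :=
  forall g, g \in mingens S -> mdeg g = d.

(* Freiman for an m-primary ideal (l(I) = n):
   |G(I^2)| = n |G(I)| - binom(n,2), written without truncated subtraction *)
Definition freiman_mprimary n (S : seq (mono n)) : Prop :=
  size (mingens (powgens S 2)) + 'C(n, 2) = n * size (mingens S).

Definition in_box n (dv : 'I_n -> nat) (a m : mono n) : bool :=
  [forall i, (a i * dv i <= m i) && (m i <= (a i).+1 * dv i)].

Definition asum n (a : mono n) : nat := \sum_(i < n) a i.

Definition pure_exps n (S : seq (mono n)) (dv : 'I_n -> nat) : Prop :=
  forall i, upow i (dv i) \in mingens S.

Definition good_wrt n (S : seq (mono n)) (dv : 'I_n -> nat) : Prop :=
  forall l, 1 <= l -> forall m, m \in mingens (powgens S l) ->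
    exists a : mono n, asum a = l.-1 /\ in_box dv a m.

Definition good n (S : seq (mono n)) : Prop :=
  exists dv, pure_exps S dv /\ good_wrt S dv.

Definition mdivide_box n (dv : 'I_n -> nat) (a m : mono n) : mono n :=
  [ffun i => m i - a i * dv i].

Definition Ia_gens n (S : seq (mono n)) (dv : 'I_n -> nat) (a : mono n) : seq (mono n) :=
  [seq mdivide_box dv a m | m <- mingens (powgens S (asum a).+1) & in_box dv a m].

Definition very_good n (S : seq (mono n)) : Prop :=
  exists dv, pure_exps S dv /\ good_wrt S dv /\
    forall a : mono n, ideal_eq (Ia_gens S dv a) S.

Definition Jgens n (d : nat) : seq (mono n) := [seq upow i d | i <- enum 'I_n].

(* Main.v *)
Require Import Defs.
From mathcomp Require Import all_boot zify.
Set Implicit Arguments. Unset Strict Implicit. Unset Printing Implicit Defensive.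

Section Basics.
Variable n : nat.
Implicit Types (m g h : mono n) (S : seq (mono n)).

Lemma maddC m g : madd m g = madd g m.
Proof. by apply/ffunP=> i; rewrite !ffunE addnC. Qed.
Lemma madd0 m : madd m (mzero n) = m.
Proof. by apply/ffunP=> i; rewrite !ffunE addn0. Qed.
Lemma mdeg_add m g : mdeg (madd m g) = mdeg m + mdeg g.
Proof. by rewrite /mdeg -big_split /=; apply: eq_bigr=> i _; rewrite ffunE. Qed.
Lemma mdeg_coord m (i : 'I_n) : m i <= mdeg m.
Proof. by rewrite /mdeg (bigD1 i) //= leq_addr. Qed.
Lemma mdeg_upow (i : 'I_n) k : mdeg (upow i k) = k.
Proof.
rewrite /mdeg (bigD1 i) //= big1 ?ffunE ?eqxx ?addn0 // => j /negPf ji.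
by rewrite ffunE ji.
Qed.
Lemma mdivP g m : reflect (forall i, g i <= m i) (mdiv g m).
Proof. exact: forallP. Qed.
Lemma mdiv_refl m : mdiv m m.
Proof. by apply/mdivP. Qed.
Lemma mdiv_trans g h m : mdiv g h -> mdiv h m -> mdiv g m.
Proof. by move=> /mdivP a /mdivP b; apply/mdivP=> i; apply: leq_trans (a i) (b i). Qed.
Lemma mdiv_add g h g' h' : mdiv g g' -> mdiv h h' -> mdiv (madd g h) (madd g' h').
Proof. by move=> /mdivP a /mdivP b; apply/mdivP=> i; rewrite !ffunE leq_add. Qed.
Lemma mdiv_deg g m : mdiv g m -> mdeg g <= mdeg m.
Proof. by move=> /mdivP a; apply: leq_sum=> i _. Qed.
Lemma mdiv_eq g m : mdiv g m -> mdeg m <= mdeg g -> g = m.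
Proof.
move=> /mdivP a le.
pose r : mono n := [ffun i => m i - g i].
have E : m = madd g r by apply/ffunP=> i; rewrite !ffunE subnKC.
have : mdeg r == 0 by move: le; rewrite E mdeg_add; lia.
rewrite /mdeg sum_nat_eq0 => /forallP H.
apply/ffunP=> i; have := H i; rewrite /= ffunE subn_eq0 => H'.
by apply/eqP; rewrite eqn_leq a H'.
Qed.
Lemma mdiv_lt g m : mdiv g m -> g != m -> mdeg g < mdeg m.
Proof.
move=> dv ne; rewrite ltn_neqAle mdiv_deg // andbT.
by apply: contra ne=> /eqP e; apply/eqP/mdiv_eq=> //; rewrite e leqnn.
Qed.

Lemma mem_mingens S m : m \in mingens S =
  (m \in S) && ~~ has (fun g => mdiv g m && (g != m)) S.
Proof. by rewrite mem_undup mem_filter andbC. Qed.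

Lemma mingens_below S m : m \in S -> exists2 g, g \in mingens S & mdiv g m.
Proof.
move: {2}(mdeg m) (leqnn (mdeg m)) => k; elim: k m => [|k IH] m lek mS.
  exists m; last exact: mdiv_refl.
  rewrite mem_mingens mS /=; apply/hasPn=> g gS; apply/negP=> /andP[dv ne].
  by have := mdiv_lt dv ne; lia.
case H: (has (fun g => mdiv g m && (g != m)) S).
  move/hasP: H=> [g gS /andP[dv ne]].
  have [h hm dh] := IH g (ltnSE (leq_trans (mdiv_lt dv ne) lek)) gS.
  by exists h => //; apply: mdiv_trans dh dv.
by exists m; [rewrite mem_mingens mS H | apply: mdiv_refl].
Qed.

Lemma upow_inj d : 0 < d -> injective (fun i : 'I_n => upow i d).
Proof.
move=> d0 i j /ffunP /(_ i); rewrite !ffunE eqxx.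
by case: eqP => // _ e; move: d0; rewrite e.
Qed.

Lemma asum1 (a : mono n) : asum a = 1 -> exists i, a = upow i 1.
Proof.
move=> H.
have [i ai] : exists i, 0 < a i.
  apply/existsP; apply: contraT; rewrite negb_exists => /forallP H0.
  move: H; rewrite /asum big1 // => i _; have := H0 i; lia.
exists i; move: H; rewrite /asum (bigD1 i) //= => H.
have ai1 : a i = 1 by lia.
move/eqP: H; rewrite ai1 -{2}[1]addn0 eqn_add2l sum_nat_eq0 => /forallP H1.
apply/ffunP=> j; rewrite ffunE; case: eqP => [->|/eqP ne] //.
by apply/eqP; have := H1 j; rewrite ne.
Qed.

Lemma prod_f (S T : seq (mono n)) s t : s \in S -> t \in T -> madd s t \in prodgens S T.
Proof. move=> sS tT; apply/allpairsP; by exists (s,t). Qed.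

Lemma asum_e (b c : mono n) (i : 'I_n) : (forall j, c j = b j + (j == i)) -> asum c = (asum b).+1.
Proof.
move=> E; rewrite /asum (eq_bigr (fun j => b j + (j == i))) // big_split /=.
rewrite [X in _ + X](bigD1 i) //= eqxx [X in _ + (_ + X)]big1 ?addn0 ?addn1 // => j /negPf ->; by [].
Qed.

End Basics.
Section Main.
Variables (n : nat) (S : seq (mono n)) (d : nat).
Hypotheses (n0 : 0 < n) (Hprim : mprimary S) (Heq : equigen S d).
Implicit Types (m g h : mono n).
Local Notation G := (mingens S).
Local Notation mu i := (upow i d).

Lemma degS s : s \in S -> d <= mdeg s.
Proof.
move=> sS; have [g gG dv] := mingens_below sS.
by rewrite -(Heq gG); apply: mdiv_deg.
Qed.

Lemma memG g : (g \in G) = (g \in S) && (mdeg g == d).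
Proof.
apply/idP/andP=> [gG|[gS /eqP dg]].
  by move: (gG); rewrite mem_mingens => /andP[-> _]; rewrite (Heq gG).
rewrite mem_mingens gS /=; apply/hasPn=> h hS; apply/negP=> /andP[dv ne].
by have := mdiv_lt dv ne; have := degS hS; lia.
Qed.

Lemma GS g : g \in G -> g \in S.
Proof. by rewrite memG => /andP[]. Qed.
Lemma Gdeg g : g \in G -> mdeg g = d.
Proof. by rewrite memG => /andP[_ /eqP]. Qed.

Lemma G_upow g (i : 'I_n) : g \in G -> d <= g i -> g = mu i.
Proof.
move=> gG le; apply/esym/mdiv_eq; last by rewrite mdeg_upow Gdeg.
by apply/mdivP=> j; rewrite ffunE; case: eqP => [->|].
Qed.

Lemma muG (i : 'I_n) : mu i \in G.
Proof.
have [k] := Hprim.2 i; case/hasP=> s sS dv.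
have [g gG dg] := mingens_below sS.
have dgi := mdiv_trans dg dv.
suff -> : mu i = g by [].
apply/esym/G_upow => //.
have E : g = upow i (g i).
  apply/ffunP=> j; rewrite ffunE; case: eqP => [->|/eqP ne] //.
  by move/mdivP: dgi => /(_ j); rewrite ffunE (negPf ne); case: (g j).
by rewrite -(Gdeg gG) E mdeg_upow ffunE eqxx.
Qed.

Lemma d0 : 0 < d.
Proof.
case: d Hprim (muG (Ordinal n0)) => // [[Hz _]] mG; exfalso; move: Hz mG.
have -> : upow (Ordinal n0) 0 = mzero n by apply/ffunP=> j; rewrite !ffunE; case: eqP.
move=> /negP Hz mG; apply: Hz; apply/hasP; exists (mzero n); [exact: GS|exact: mdiv_refl].
Qed.

Lemma mu_inj : injective (fun i : 'I_n => mu i).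
Proof. exact: upow_inj d0. Qed.

Lemma powgensS l : powgens S l.+1 = prodgens S (powgens S l).
Proof. by []. Qed.

Lemma pow_deg l m : m \in powgens S l -> l * d <= mdeg m.
Proof.
elim: l m => [|l IH] m; first by rewrite mul0n.
rewrite powgensS => /allpairsP [[s t] [/= sS tP ->]].
by rewrite mdeg_add mulSn leq_add ?degS ?IH.
Qed.

Lemma pow_below l m : m \in powgens S l ->
  exists m', [/\ m' \in powgens S l, mdeg m' = l * d & mdiv m' m].
Proof.
elim: l m => [|l IH] m.
  rewrite inE => /eqP ->; exists (mzero n); split; rewrite ?inE ?mul0n ?mdiv_refl //.
  by rewrite /mdeg big1 // => i _; rewrite ffunE.
rewrite powgensS => /allpairsP [[s t] [/= sS tP ->]].
have [g gG dg] := mingens_below sS.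
have [t' [t'P dt' dvt]] := IH t tP.
exists (madd g t'); split.
- by apply: prod_f => //; apply: GS.
- by rewrite mdeg_add dt' Gdeg // mulSn.
- exact: mdiv_add.
Qed.

Lemma mem_minpow l m :
  (m \in mingens (powgens S l)) = (m \in powgens S l) && (mdeg m == l * d).
Proof.
apply/idP/andP=> [mP|[mP /eqP dm]].
  move: mP; rewrite mem_mingens => /andP[mP nh]; split=> //.
  have [m' [m'P dm' dv]] := pow_below mP.
  case: (eqVneq m' m) => [<-|ne]; first by rewrite dm'.
  by move/hasPn: nh => /(_ m' m'P); rewrite dv ne.
rewrite mem_mingens mP /=; apply/hasPn=> h hP; apply/negP=> /andP[dv ne].
by have := mdiv_lt dv ne; have := pow_deg hP; lia.
Qed.

Definition bmul (b : mono n) : mono n := [ffun i => b i * d].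

Lemma mdeg_bmul b : mdeg (bmul b) = asum b * d.
Proof. by rewrite /mdeg /asum big_distrl; apply: eq_bigr => i _; rewrite ffunE. Qed.

Lemma pow_of g (b : mono n) l : g \in G -> asum b = l -> madd g (bmul b) \in powgens S l.+1.
Proof.
move=> gG; elim: l b => [|l IH] b bs.
  have b0 : forall i, b i = 0.
    move=> i; have := mdeg_coord b i; rewrite /mdeg -/(asum b) bs; lia.
  have -> : madd g (bmul b) = madd g (mzero n).
    by apply/ffunP=> i; rewrite !ffunE b0.
  by apply: prod_f; [exact: GS | rewrite inE].
have [i bi] : exists i, 0 < b i.
  apply/existsP; apply: contraT; rewrite negb_exists => /forallP H0.
  move: bs; rewrite /asum big1 // => i _; have := H0 i; lia.
have [b' Eb] : exists b' : mono n, forall j, b' j = b j - (j == i).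
  by exists [ffun j => b j - (j == i)] => j; rewrite ffunE.
have bs' : asum b' = l.
  apply/eqP; rewrite -eqSS -bs (asum_e (b := b') (c := b) (i := i)) // => j.
  by rewrite Eb; case: eqP => [->|] /=; [rewrite subn1 addn1 prednK | rewrite subn0 addn0].
have -> : madd g (bmul b) = madd (mu i) (madd g (bmul b')).
  apply/ffunP=> j; rewrite !ffunE Eb; case: eqP => [->|_]; last by rewrite subn0.
  by rewrite mulnBl mul1n addnCA subnKC // leq_pmull.
by rewrite powgensS; apply: prod_f; [apply: GS; apply: muG|apply: IH].
Qed.

Definition H3 := forall g h, g \in G -> h \in G ->
  exists g' i, g' \in G /\ madd g h = madd g' (mu i).

Lemma pow2 m : m \in powgens S 2 -> exists s t, [/\ s \in S, t \in S & m = madd s t].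
Proof.
rewrite powgensS => /allpairsP [[s t'] [/= sS] /allpairsP [[t z] [/= tS]]].
by rewrite inE => /eqP -> -> ->; exists s, t; rewrite madd0.
Qed.

Lemma pow2_of s t : s \in S -> t \in S -> madd s t \in powgens S 2.
Proof. by move=> sS tS; rewrite -[t]madd0; apply: prod_f => //; apply: prod_f; rewrite ?inE. Qed.

Lemma decomp l m : H3 -> m \in powgens S l.+1 -> mdeg m = l.+1 * d ->
  exists g b, [/\ g \in G, asum b = l & m = madd g (bmul b)].
Proof.
move=> H; elim: l m => [|l IH] m.
  rewrite powgensS => /allpairsP [[s z] [/= sS]]; rewrite inE => /eqP -> -> dm.
  exists s, (mzero n); split.
  - by rewrite memG sS /= -(madd0 s) dm mul1n.
  - by rewrite /asum big1 // => i _; rewrite ffunE.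
  - by apply/ffunP=> i; rewrite !ffunE.
rewrite powgensS => /allpairsP [[s t] [/= sS tP ->]] dm.
have ds := degS sS; have dt := @pow_deg l.+1 t tP.
move: dm; rewrite mdeg_add => dm.
have dt' : mdeg t = l.+1 * d by move: ds dt dm; rewrite !mulSn; lia.
have ds' : mdeg s = d by move: ds dt dm; rewrite !mulSn; lia.
have tP' : t \in powgens S l.+1 := tP.
have [g [b [gG bs ->]]] := IH t tP' dt'.
have sG : s \in G by rewrite memG sS ds' eqxx.
have [g' [i [g'G E]]] := H s g sG gG.
exists g', [ffun j => b j + (j == i)]; split=> //.
  by rewrite (asum_e (b := b) (i := i)) ?bs // => j; rewrite ffunE.
apply/ffunP=> j; move/ffunP: E => /(_ j); rewrite !ffunE => E.
rewrite addnA E -addnA mulnDl; congr (_ + _); rewrite addnC; case: eqP => _ //.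
by rewrite mul1n.
Qed.

Lemma muJ (i : 'I_n) : mu i \in Jgens n d.
Proof. by apply/mapP; exists i; rewrite ?mem_enum. Qed.

Lemma ideal_H3 : ideal_eq (powgens S 2) (prodgens S (Jgens n d)) <-> H3.
Proof.
split=> [E g h gG hG | H m].
  have : in_ideal (prodgens S (Jgens n d)) (madd g h).
    rewrite -E; apply/hasP; exists (madd g h); last exact: mdiv_refl.
    by apply: pow2_of; apply: GS.
  case/hasP=> p /allpairsP [[s q] [/= sS /mapP [i _ ->] ->]] dv.
  have [g' g'G dg'] := mingens_below sS.
  exists g', i; split=> //; apply/esym/mdiv_eq.
    by apply: mdiv_trans dv; apply: mdiv_add dg' (mdiv_refl _).
  by rewrite !mdeg_add mdeg_upow (Gdeg gG) (Gdeg hG) (Gdeg g'G).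
apply/idP/idP.
  case/hasP=> p pP dv; have [s [t [sS tS Ep]]] := pow2 pP.
  have [g gG dg] := mingens_below sS; have [h hG dh] := mingens_below tS.
  have [g' [i [g'G E]]] := H g h gG hG.
  apply/hasP; exists (madd g' (mu i)); first by apply: prod_f; [exact: GS|exact: muJ].
  by rewrite -E; apply: mdiv_trans dv; rewrite Ep; apply: mdiv_add.
case/hasP=> p /allpairsP [[s q] [/= sS /mapP [i _ ->] ->]] dv.
apply/hasP; exists (madd s (mu i)) => //; apply: pow2_of sS _.
by apply: GS; apply: muG.
Qed.

Lemma ideal_sub (X Y : seq (mono n)) m : (forall x, x \in X -> in_ideal Y x) ->
  in_ideal X m -> in_ideal Y m.
Proof.
move=> H /hasP [x xX dx]; have /hasP [y yY dy] := H x xX.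
by apply/hasP; exists y => //; apply: mdiv_trans dy dx.
Qed.

Lemma Gle g (i : 'I_n) : g \in G -> g i <= d.
Proof. by move=> gG; rewrite -(Gdeg gG) mdeg_coord. Qed.

Lemma vg_H3 : very_good S <-> H3.
Proof.
split=> [[dv [pe [gw Ia]]] g h gG hG | H].
  have Edv i : dv i = d by have := Gdeg (pe i); rewrite mdeg_upow.
  have mP : madd g h \in mingens (powgens S 2).
    by rewrite mem_minpow pow2_of ?GS //= mdeg_add !Gdeg // mul2n addnn.
  have [a [Ha bx]] := gw 2 isT _ mP.
  have [i Ea] := asum1 Ha.
  pose x := mdivide_box dv a (madd g h).
  have xI : in_ideal (Ia_gens S dv a) x.
    apply/hasP; exists x; last exact: mdiv_refl.
    by apply/mapP; exists (madd g h) => //; rewrite mem_filter bx Ha.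
  rewrite Ia in xI; case/hasP: xI => s sS ds.
  have Ex : madd g h = madd x (mu i).
    apply/ffunP=> j; move/forallP: bx => /(_ j) /andP [le _].
    rewrite !ffunE; rewrite Ea ffunE Edv in le *.
    move: le; rewrite ffunE; case: (j == i); rewrite ?mul1n ?mul0n ?subn0 ?addn0 // => le.
    by rewrite subnK.
  clearbody x.
  have dx : mdeg x = d.
    by move: (congr1 (@mdeg n) Ex); rewrite !mdeg_add mdeg_upow (Gdeg gG) (Gdeg hG); lia.
  have xs : s = x by apply: mdiv_eq ds _; rewrite dx degS.
  by exists x, i; split=> //; rewrite memG -xs sS xs dx eqxx.
exists (fun _ => d); split; first by move=> i; apply: muG.
split.
  case=> [//|l] _ m; rewrite mem_minpow => /andP [mP /eqP dm].
  have [g [b [gG bs ->]]] := decomp H mP dm.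
  exists b; split=> //; apply/forallP=> i; rewrite !ffunE mulSn.
  by rewrite leq_addl /= leq_add2r Gle.
move=> a m; apply/idP/idP; apply: ideal_sub => x.
  case/mapP=> m'; rewrite mem_filter => /andP [bx m'P] ->.
  move: m'P; rewrite mem_minpow => /andP [m'P /eqP dm].
  have [g [b [gG bs Em]]] := decomp H m'P dm.
  suff : mdivide_box (fun _ => d) a m' \in G.
    by move=> xG; apply/hasP; exists (mdivide_box (fun _ => d) a m'); [exact: GS|exact: mdiv_refl].
  have bxi j : a j * d <= m' j <= (a j).+1 * d by move/forallP: bx => /(_ j).
  case: (boolP [exists j, b j < a j]) => [/existsP [i lti] | ].
    have gi : g = mu i.
      apply: G_upow => //; have := bxi i; rewrite Em !ffunE => /andP [le _].
      have : (b i).+1 * d <= a i * d by rewrite leq_mul2r lti orbT.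
      rewrite mulSn; lia.
    have Ec j : m' j = (b j + (j == i)) * d.
      by rewrite Em gi !ffunE mulnDl addnC; case: eqP => _; rewrite ?mul1n ?mul0n.
    have ca j : a j <= b j + (j == i) <= (a j).+1.
      by have := bxi j; rewrite Ec !leq_pmul2r ?d0.
    have [e Ee] : exists e : mono n, forall j, e j = b j + (j == i) - a j.
      by exists [ffun j => b j + (j == i) - a j] => j; rewrite ffunE.
    have se : asum e = 1.
      have : asum a + asum e = (asum b).+1.
        rewrite -(asum_e (b := b) (c := [ffun j => b j + (j == i)]) (i := i)); last by move=> j; rewrite ffunE.
        rewrite /asum -big_split /=; apply: eq_bigr=> j _; rewrite ffunE Ee.
        by have := ca j; case/andP=> /subnKC.
      by rewrite bs; lia.
    have [k Ek] := asum1 se.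
    suff -> : mdivide_box (fun _ => d) a m' = mu k by apply: muG.
    apply/ffunP=> j; rewrite !ffunE Ec -mulnBl -Ee Ek ffunE.
    by case: eqP => _; rewrite ?mul1n ?mul0n.
  rewrite negb_exists => /forallP nb.
  have ab : a = b.
    apply: mdiv_eq; first by apply/mdivP=> j; have := nb j; rewrite -leqNgt.
    by rewrite /mdeg -/(asum a) -/(asum b) bs.
  suff -> : mdivide_box (fun _ => d) a m' = g by [].
  by apply/ffunP=> j; rewrite Em !ffunE ab addnK.
move=> sS; have [g gG dg] := mingens_below sS.
apply/hasP; exists g => //; apply/mapP; exists (madd g (bmul a)).
  rewrite mem_filter mem_minpow // pow_of //; apply/andP; split.
    apply/forallP=> i; rewrite !ffunE mulSn.
    by rewrite leq_addl /= leq_add2r Gle.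
  by rewrite /= mdeg_add mdeg_bmul Gdeg // mulSn.
by apply/esym/ffunP=> i; rewrite !ffunE addnK.
Qed.


Lemma count_lt_iota (k N : nat) : k <= N -> count (fun x => x < k) (iota 0 N) = k.
Proof.
move=> jn; rewrite -(subnKC jn) iotaD count_cat add0n.
rewrite (eq_in_count (a2 := predT)); last by move=> x; rewrite mem_iota.
rewrite count_predT size_iota (eq_in_count (a2 := pred0)).
  by rewrite count_pred0 addn0.
by move=> x; rewrite mem_iota /= => /andP [le _]; rewrite ltnNge le.
Qed.

Lemma count_lt (j : 'I_n) : count (fun i : 'I_n => i < j) (enum 'I_n) = j.
Proof.
rewrite -(count_map val (fun k => k < j)) val_enum_ord.
by apply: count_lt_iota; apply: ltnW.
Qed.

Definition Bpp := [seq (j, i) | j : 'I_n <- enum 'I_n, i : 'I_n <- filter (fun i : 'I_n => i < j) (enum 'I_n)].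

Lemma uniq_Bpp : uniq Bpp.
Proof.
apply: allpairs_uniq_dep; first exact: enum_uniq.
  by move=> x _; apply: filter_uniq; apply: enum_uniq.
by move=> [x1 y1] [x2 y2] _ _ /= [-> ->].
Qed.

Lemma size_Bpp : size Bpp = 'C(n, 2).
Proof.
rewrite size_allpairs_dep.
rewrite (eq_map (g := fun j : 'I_n => val j)); last by move=> j; rewrite size_filter count_lt.
rewrite val_enum_ord sumnE -bin2_sum.
by rewrite /index_iota subn0.
Qed.

Lemma mem_Bpp (j i : 'I_n) : ((j, i) \in Bpp) = (i < j).
Proof.
apply/allpairsPdep/idP=> [[x [y [_ + [-> ->]]]]|lt].
  by rewrite mem_filter => /andP [].
by exists j, i; rewrite mem_enum mem_filter mem_enum lt.
Qed.

Definition Pairs := [seq (g, i) | g <- G, i <- enum 'I_n].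
Definition exc (p : mono n * 'I_n) := [exists j : 'I_n, (p.1 == mu j) && (p.2 < j)].
Definition Aps := filter (predC exc) Pairs.
Definition Fp (p : mono n * 'I_n) := madd p.1 (mu p.2).
Definition Q := map Fp Aps.

Lemma uniq_Pairs : uniq Pairs.
Proof.
apply: allpairs_uniq; [exact: undup_uniq | exact: enum_uniq |].
by move=> [x1 y1] [x2 y2] _ _ /= [-> ->].
Qed.

Lemma mem_Pairs g (i : 'I_n) : ((g, i) \in Pairs) = (g \in G).
Proof.
apply/allpairsP/idP=> [[[x y] [/= + _ [-> _]]] //|gG].
by exists (g, i); rewrite mem_enum.
Qed.

Lemma size_B : size (filter exc Pairs) = 'C(n, 2).
Proof.
rewrite -size_Bpp -(size_map (fun p => (mu p.1, p.2))).
apply: perm_size; apply: uniq_perm.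
- by apply: filter_uniq; apply: uniq_Pairs.
- rewrite map_inj_in_uniq ?uniq_Bpp // => [[x1 y1] [x2 y2] _ _ /= [/mu_inj -> ->]] //.
- move=> [g i]; rewrite mem_filter mem_Pairs; apply/andP/mapP.
    case=> /existsP [j /andP [/eqP /= -> lt]] _; exists (j, i) => //.
    by rewrite mem_Bpp.
  case=> [[j i'] + [-> ->]]; rewrite mem_Bpp => lt; split; last exact: muG.
  by apply/existsP; exists j; rewrite /= eqxx.
Qed.

Lemma size_Aps : size Aps + 'C(n, 2) = n * size G.
Proof.
rewrite -size_B /Aps !size_filter addnC count_predC /Pairs size_allpairs.
by rewrite size_enum_ord mulnC.
Qed.

Lemma G_coord g h (i j : 'I_n) : g \in G -> i != j -> madd g (mu i) = madd h (mu j) -> g = mu j.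
Proof.
move=> gG ne /ffunP /(_ j); rewrite !ffunE eqxx eq_sym (negPf ne) addn0 => E.
by apply: G_upow => //; rewrite E leq_addl.
Qed.

Lemma Fp_inj : {in Aps &, injective Fp}.
Proof.
move=> [g i] [h j]; rewrite !mem_filter !mem_Pairs /= => /andP [ex1 gG] /andP [ex2 hG].
rewrite /Fp /= => E.
case: (eqVneq i j) => [eij|ne].
  subst j; congr (_, _); apply/ffunP=> k; move/ffunP: E => /(_ k); rewrite !ffunE.
  by move/addIn.
have eg := G_coord gG ne E; have eh := G_coord hG (contra_neq esym ne) (esym E).
subst g h; exfalso.
move: ex1 ex2; rewrite /exc /= => /existsPn /(_ j); rewrite eqxx /= => n1.
move=> /existsPn /(_ i); rewrite eqxx /= => n2.
by move: ne; rewrite neq_ltn (negPf n1) (negPf n2).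
Qed.

Lemma uniq_Q : uniq Q.
Proof. by rewrite map_inj_in_uniq ?filter_uniq ?uniq_Pairs //; exact: Fp_inj. Qed.

Lemma mem_Q x : reflect (exists g i, g \in G /\ x = madd g (mu i)) (x \in Q).
Proof.
apply: (iffP mapP) => [[[g i]] + ->|[g [i [gG ->]]]].
  by rewrite mem_filter mem_Pairs => /andP [_ gG]; exists g, i.
case: (boolP (exc (g, i))) => [/existsP [j /andP [/eqP /= eg lt]]|nex].
  exists (mu i, j); last by rewrite /Fp /= eg maddC.
  rewrite mem_filter mem_Pairs muG andbT /=; apply/existsPn=> k.
  apply/negP=> /andP [/eqP /mu_inj ek]; subst k.
  by rewrite /= ltnNge ltnW.
by exists (g, i) => //; rewrite mem_filter mem_Pairs gG andbT; exact: nex.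
Qed.

Lemma mem_P2 x : reflect (exists g h, [/\ g \in G, h \in G & x = madd g h])
  (x \in mingens (powgens S 2)).
Proof.
rewrite mem_minpow; apply: (iffP andP) => [[xP /eqP dx]|[g [h [gG hG ->]]]].
  have [s [t [sS tS Ex]]] := pow2 xP.
  have ds := degS sS; have dt := degS tS.
  move: dx; rewrite Ex mdeg_add => dx.
  exists s, t; split=> //; rewrite memG ?sS ?tS /=; apply/eqP; lia.
split; first by apply: pow2_of; apply: GS.
by rewrite mdeg_add !Gdeg // mul2n addnn.
Qed.

Lemma Q_sub : {subset Q <= mingens (powgens S 2)}.
Proof.
move=> x /mem_Q [g [i [gG ->]]]; apply/mem_P2; exists g, (mu i); split=> //.
exact: muG.
Qed.

Lemma freiman_H3 : freiman_mprimary S <-> H3.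
Proof.
have UP : uniq (mingens (powgens S 2)) by apply: undup_uniq.
have sQ : size Q + 'C(n, 2) = n * size G by rewrite size_map size_Aps.
rewrite /freiman_mprimary; split=> [F g h gG hG | H].
  have eqs : size (mingens (powgens S 2)) <= size Q by move: F; rewrite -sQ; lia.
  have [_ EQ] := uniq_min_size uniq_Q Q_sub eqs.
  have : madd g h \in Q by rewrite EQ; apply/mem_P2; exists g, h.
  by case/mem_Q => g' [i [g'G E]]; exists g', i.
have sub : {subset mingens (powgens S 2) <= Q}.
  move=> x /mem_P2 [g [h [gG hG ->]]]; have [g' [i [g'G ->]]] := H g h gG hG.
  by apply/mem_Q; exists g', i.
have [E _] := uniq_min_size UP sub (uniq_leq_size uniq_Q Q_sub).
by rewrite E.
Qed.

End Main.

Unset Implicit Arguments.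

Theorem mainTheorem20 (n : nat) (S : seq (mono n)) (d : nat) :
  0 < n -> mprimary S -> equigen S d ->
  [/\ (freiman_mprimary S <-> very_good S),
      (very_good S <-> ideal_eq (powgens S 2) (prodgens S (Jgens n d)))
    & (ideal_eq (powgens S 2) (prodgens S (Jgens n d)) <-> freiman_mprimary S)].
Proof.
move=> n0 Hp He.
have A := ideal_H3 n0 Hp He; have B := vg_H3 n0 Hp He; have C := freiman_H3 n0 Hp He.
split; tauto.
Qed.
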